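(* Let $q\in(0,1)$, let $a_n,b_n,c_n$ be the recurrence coefficients of the little $q$-Legendre polynomials and $P_1(x)=(x-b_0)/a_0=(q+1)x-q$. Let $K:=\left\lceil\frac{\log4}{\log\frac{1}{q}}-1\right\rceil$ and, for all $n,k\in\mathbb{N}_0$, \[A_n(k):=\frac{[b_{k+1}-P_1(1-q^n)][b_{k+2}-P_1(1-q^n)]}{a_{k+1}c_{k+2}},\qquad B_n(k):=\frac{[b_{n+k+1}-P_1(1-q^n)]q^k}{c_{n+k+1}}.\] Then $A_n(n+k)>4$ and $B_n(k)>\frac{1}{2q}$ for all $n\in\mathbb{N}_0$ and all $k\in\mathbb{N}_0$ with $k\ge K$. Moreover, $\lim_{k\to\infty}B_n(k)=\frac1q$ for every $n\in\mathbb{N}_0$.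
   Context: For $q\in(0,1)$ the recurrence coefficients are $a_0=\frac{1}{q+1}$, $b_0=\frac{q}{q+1}$, and for $n\ge1$: $a_n=q^n\frac{(1+q)(1-q^{n+1})}{(1-q^{2n+1})(1+q^{n+1})}$, $c_n=q^n\frac{(1+q)(1-q^n)}{(1-q^{2n+1})(1+q^n)}$, $b_n=\frac{(1-q^n)(1-q^{n+1})}{(1+q^n)(1+q^{n+1})}$. *)

(* Defs.v *)
From HB Require Import structures.
From mathcomp Require Import all_boot all_order all_algebra.
From mathcomp Require Import all_classical all_reals all_analysis.
Set Implicit Arguments. Unset Strict Implicit. Unset Printing Implicit Defensive.
Import Order.TTheory GRing.Theory Num.Theory.
Local Open Scope ring_scope.

Section LittleQLegendre.
Variable R : realType.
Variable q : R.

Definition qa (n : nat) : R :=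
  if n is 0%N then 1 / (q + 1)
  else q ^+ n * ((1 + q) * (1 - q ^+ n.+1))
       / ((1 - q ^+ (2 * n).+1) * (1 + q ^+ n.+1)).

Definition qb (n : nat) : R :=
  if n is 0%N then q / (q + 1)
  else ((1 - q ^+ n) * (1 - q ^+ n.+1)) / ((1 + q ^+ n) * (1 + q ^+ n.+1)).

(* c_n is only defined for n >= 1; c_0 (never used) is set to 0 *)
Definition qc (n : nat) : R :=
  if n is 0%N then 0
  else q ^+ n * ((1 + q) * (1 - q ^+ n))
       / ((1 - q ^+ (2 * n).+1) * (1 + q ^+ n)).

Definition P1 (x : R) : R := (x - qb 0) / qa 0.

Definition An (n k : nat) : R :=
  ((qb k.+1 - P1 (1 - q ^+ n)) * (qb k.+2 - P1 (1 - q ^+ n)))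
  / (qa k.+1 * qc k.+2).

Definition Bn (n k : nat) : R :=
  ((qb (n + k).+1 - P1 (1 - q ^+ n)) * q ^+ k) / qc (n + k).+1.

Definition Kq : int := Num.ceil (ln 4 / ln (1 / q) - 1).

End LittleQLegendre.

(* Main.v *)
Require Import Defs.
From HB Require Import structures.
From mathcomp Require Import all_boot all_order all_algebra.
From mathcomp Require Import all_classical all_reals all_analysis.
From mathcomp Require Import ring lra.
Import Order.TTheory GRing.Theory Num.Theory.
Import numFieldNormedType.Exports.
Local Open Scope classical_set_scope.
Local Open Scope ring_scope.

Section S.
Variable R : realType.

Lemma pnz (x : R) : 0 < x -> x != 0.
Proof. exact: lt0r_neq0. Qed.

Lemma lt1M (a b : R) : 0 < a -> a < 1 -> 0 < b -> b < 1 -> 0 < a * b /\ a * b < 1.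
Proof. move=> *; split; nra. Qed.

Lemma pw (q : R) m : q^+(2 * m).+1 = q * (q^+m)^+2.
Proof. by rewrite exprS mulnC exprM. Qed.

Definition gX (q u v : R) : R := q^-1 - 2*v / ((1+q*u*v)*(1+q*(q*u*v))).
Definition gF (q u v : R) : R := ((1 - q*(q*u*v)^+2) * (1+q*u*v)) / (1 - q*u*v).
Definition gB (q u v : R) : R := gX q u v * gF q u v.

Definition gA (q u v : R) : R :=
  let w := q*u*v in
  (1 - 2*q*v/((1+w)*(1+q*w))) * (1 - 2*q^+2*v/((1+q*w)*(1+q^+2*w))) *
  ((1-q*w^+2)*(1-q*(q*w)^+2)*(1+q*w)^+2) / ((1-q*w)^+2 * (q^+3*v^+2)).

Lemma facts (q : R) (hq0 : 0 < q) (hq1 : q < 1) n k : [/\ 0 < q^+n, 0 < q^+k, q^+n <= 1, q^+k <= 1 &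
   0 < q * q^+n * q^+k /\ q * q^+n * q^+k < 1].
Proof.
have u0 : 0 < q^+n by exact: exprn_gt0.
have v0 : 0 < q^+k by exact: exprn_gt0.
have u1 : q^+n <= 1 by rewrite exprn_ile1 // ltW.
have v1 : q^+k <= 1 by rewrite exprn_ile1 // ltW.
split => //; split; first by rewrite !mulr_gt0.
have h : q^+n * q^+k <= 1 by rewrite mulr_ile1 // ltW.
apply: (le_lt_trans _ hq1); rewrite -mulrA ger_pMr //.
Qed.

Lemma BnE (q : R) (hq0 : 0 < q) (hq1 : q < 1) n k : Bn q n k = gB q (q^+n) (q^+k).
Proof.
have e1 : q^+(n+k).+1 = q*q^+n*q^+k by rewrite exprS exprD mulrA.
have e2 : q^+(n+k).+2 = q*(q*q^+n*q^+k) by rewrite exprS e1.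
have [u0 v0 u1 v1 [w0 w1]] := @facts q hq0 hq1 n k.
rewrite /Bn /gB /gX /gF /qb /qc /P1 /= !pw e2 e1.
field.
rewrite !expr2.
repeat (apply/andP; split); apply: pnz; try nra.
have [h1 h2] := @lt1M _ _ w0 w1 w0 w1. have [h3 h4] := @lt1M _ _ hq0 hq1 h1 h2. nra.
Qed.

Lemma AnE (q : R) (hq0 : 0 < q) (hq1 : q < 1) n k : An q n (n + k) = gA q (q^+n) (q^+k).
Proof.
have e1 : q^+(n+k).+1 = q*q^+n*q^+k by rewrite exprS exprD mulrA.
have e2 : q^+(n+k).+2 = q*(q*q^+n*q^+k) by rewrite exprS e1.
have e3 : q^+(n+k).+3 = q*(q*(q*q^+n*q^+k)) by rewrite exprS e2.
have [u0 v0 u1 v1 [w0 w1]] := @facts q hq0 hq1 n k.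
rewrite /An /gA /qb /qc /qa /P1 /= !pw e3 e2 e1.
field.
rewrite !expr2.
repeat (apply/andP; split); apply: pnz; try nra.
  have [h1 h2] := @lt1M _ _ w0 w1 w0 w1. have [h3 h4] := @lt1M _ _ hq0 hq1 h1 h2. nra.
have [qw0 qw1] := @lt1M _ _ hq0 hq1 w0 w1.
have [h1 h2] := @lt1M _ _ qw0 qw1 qw0 qw1. have [h3 h4] := @lt1M _ _ hq0 hq1 h1 h2. nra.
Qed.
End S.
Arguments gX {R}. Arguments gF {R}. Arguments gB {R}. Arguments gA {R}.

Lemma gB_bound (R : realType) (q u v : R) : 0 < q -> q < 1 -> 0 < u -> 0 < v ->
  0 < q * u * v -> q * u * v < 1 -> q * v <= 1/4 -> 1/(2*q) < gB q u v.
Proof.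
move=> hq0 hq1 u0 v0 w0 w1 hs.
rewrite /gB /gX /gF.
move: (q*u*v) w0 w1 => w w0 w1.
have hD : 1 < (1+w)*(1+q*w) by nra.
have hD0 : 0 < (1+w)*(1+q*w) by lra.
have h1 : 2*v/((1+w)*(1+q*w)) < 2*v by rewrite ltr_pdivrMr //; nra.
have iq0 : 0 < q^-1 by rewrite invr_gt0.
have e : q * q^-1 = 1 by rewrite mulfV // gt_eqF.
have h2 : v <= q^-1/4 by nra.
have -> : 1/(2*q) = q^-1/2 by field; rewrite gt_eqF.
have hX : q^-1/2 < q^-1 - 2*v/((1+w)*(1+q*w)) by lra.
have hF : 1 <= (1 - q*w^+2) * (1+w) / (1-w).
  rewrite ler_pdivlMr; last lra.
  rewrite expr2; nra.
nra.
Qed.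

Lemma gA_bound (R : realType) (q u v : R) : 0 < q -> q < 1 -> 0 < u -> 0 < v ->
  0 < q * u * v -> q * u * v < 1 -> q * v <= 1/4 -> 4 < gA q u v.
Proof.
move=> hq0 hq1 u0 v0 w0 w1 hs.
rewrite /gA.
move: (q*u*v) w0 w1 => w w0 w1.
have qw0 : 0 < q * w by nra.
have qw1 : q * w < w by nra.
have q2 : 0 < q^+2 by rewrite exprn_gt0.
have q21 : q^+2 < q by rewrite expr2; nra.
have hD : 1 < (1+w)*(1+q*w) by nra.
have hD' : 1 < (1+q*w)*(1+q^+2*w) by nra.
have qv0 : 0 < q * v by nra.
have q2v0 : 0 < q^+2 * v by nra.
have h1 : 2*q*v/((1+w)*(1+q*w)) < 2*q*v by rewrite ltr_pdivrMr; nra.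
have h2 : 2*q^+2*v/((1+q*w)*(1+q^+2*w)) < 2*q^+2*v by rewrite ltr_pdivrMr; nra.
have h3 : q^+2 * v < q * v by nra.
have hX : 1/4 < (1 - 2*q*v/((1+w)*(1+q*w))) * (1 - 2*q^+2*v/((1+q*w)*(1+q^+2*w))) by nra.
have m0 : 0 < 1 - q*w by nra.
have ha : 1 - q*w <= 1 - q*w^+2 by rewrite expr2; nra.
have hb : 1 - q*w <= 1 - q*(q*w)^+2 by rewrite expr2; nra.
have hab : (1-q*w)^+2 <= (1 - q*w^+2) * (1 - q*(q*w)^+2).
  by rewrite expr2; apply: ler_pM => //; apply: ltW.
have hc : 1 <= (1+q*w)^+2 by rewrite expr2; nra.
have M0 : 0 < (1-q*w)^+2 by rewrite exprn_gt0.
have hN : (1-q*w)^+2 <= (1 - q*w^+2) * (1 - q*(q*w)^+2) * (1+q*w)^+2.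
  move: hab hc M0; move: ((1 - q*w^+2) * (1 - q*(q*w)^+2)) ((1+q*w)^+2) ((1-q*w)^+2).
  move=> a c m *; nra.
have hP : 16 * (q^+3 * v^+2) <= q.
  have -> : q^+3 * v^+2 = q * ((q*v) * (q*v)) by rewrite !exprS expr0; ring.
  move: qv0 hs; move: (q*v) => s s0 s1.
  have : s * s <= 1/16 by nra.
  nra.
have P0 : 0 < q^+3 * v^+2 by rewrite mulr_gt0 // exprn_gt0.
rewrite ltr_pdivlMr; last by rewrite mulr_gt0.
move: hX hN hP P0 M0.
move: ((1 - 2*q*v/((1+w)*(1+q*w))) * (1 - 2*q^+2*v/((1+q*w)*(1+q^+2*w)))).
move: ((1 - q*w^+2) * (1 - q*(q*w)^+2) * (1+q*w)^+2) (q^+3 * v^+2) ((1-q*w)^+2).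
move=> N P M X hX hN hP P0 M0.
have e1 : 4 * (M * P) <= M * q / 4 by nra.
have e2 : M * q / 4 < M / 4 by nra.
have e3 : M / 4 < X * M by nra.
have e4 : X * M <= X * N by nra.
lra.
Qed.

Lemma lim_gB (R : realType) (q u : R) : 0 < q -> q < 1 ->
  (fun k : nat => gB q u (q^+k)) @ \oo --> q^-1.
Proof.
move=> hq0 hq1.
have hv : (fun k : nat => q^+k) @ \oo --> 0 by apply: cvg_expr; rewrite gtr0_norm.
have E : gB q u 0 = q^-1.
  by rewrite /gB /gX /gF; field; rewrite gt_eqF.
suff H : (fun k : nat => gB q u (q^+k)) @ \oo --> gB q u 0 by rewrite E in H.
rewrite /gB /gX /gF.
apply: cvgM.
  apply: cvgB; first exact: cvg_cst.
  apply: cvgM; first by apply: cvgM => //; exact: cvg_cst.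
  apply: cvgV; first by rewrite !(mulr0, addr0) mulr1 oner_neq0.
  apply: cvgM; (apply: cvgD; first exact: cvg_cst).
    by apply: cvgM => //; apply: cvgM; exact: cvg_cst.
  by apply: cvgM; [exact: cvg_cst|]; apply: cvgM => //; apply: cvgM; exact: cvg_cst.
have hw : (fun x : nat => q*u*q^+x) @ \oo --> q*u*0.
  by apply: cvgM => //; exact: cvg_cst.
apply: cvgM.
  apply: cvgM.
    apply: cvgB; first exact: cvg_cst.
    apply: cvgM; first exact: cvg_cst.
    exact: (@cvgM _ _ _ _ (fun x : nat => q*u*q^+x) (fun x : nat => q*u*q^+x)).
  by apply: cvgD => //; exact: cvg_cst.
apply: cvgV; first by rewrite !mulr0 subr0 oner_neq0.
by apply: cvgB => //; exact: cvg_cst.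
Qed.

Lemma Kfact (R : realType) (q : R) (k : nat) : 0 < q -> q < 1 ->
  Kq q <= k%:Z -> q * q^+k <= 1/4.
Proof.
move=> hq0 hq1; rewrite /Kq ceil_le_int -pmulrn => h.
have iq : 0 < 1/q by rewrite divr_gt0.
have L0 : 0 < ln (1/q) by apply: ln_gt0; rewrite ltr_pdivlMr // mul1r.
have h2 : ln 4 <= ln (1/q) *+ k.+1.
  move: h; rewrite lerBlDr ler_pdivrMr // => h; move: h L0; move: (ln (1/q)) => L h L0.
  by have -> : L *+ k.+1 = (k%:R + 1) * L by rewrite mulrDl mul1r mulr_natl mulrSr.
rewrite -lnXn // ler_ln ?posrE ?exprn_gt0 // in h2.
rewrite -exprS.
have x0 : 0 < q^+k.+1 by rewrite exprn_gt0.
move: h2; rewrite div1r exprVn.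
have e : q^+k.+1 * (q^+k.+1)^-1 = 1 by rewrite mulfV // gt_eqF.
move: x0 e; move: (q^+k.+1) => x x0 e h3.
have i0 : 0 < x^-1 by rewrite invr_gt0.
move: e h3 i0; move: (x^-1) => y e h3 i0.
nra.
Qed.

Theorem lemma2p4 (R : realType) (q : R) (hq0 : 0 < q) (hq1 : q < 1) :
  (forall n k : nat, Kq q <= k%:Z ->
     4 < An q n (n + k) /\ 1 / (2 * q) < Bn q n k) /\
  (forall n : nat, (fun k : nat => Bn q n k) @ \oo --> q^-1).
Proof.
split.
  move=> n k hk.
  have hs := @Kfact R q k hq0 hq1 hk.
  have [u0 v0 u1 v1 [w0 w1]] := @facts R q hq0 hq1 n k.
  split.
    by rewrite AnE //; apply: gA_bound.
  by rewrite BnE //; apply: gB_bound.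
move=> n.
have -> : (fun k : nat => Bn q n k) = (fun k : nat => gB q (q^+n) (q^+k)).
  by apply: funext => k; rewrite BnE.
exact: lim_gB.
Qed.
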